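(* Let $E = [c_1,d_1]\cup\cdots\cup[c_k,d_k]$ with $0 = c_1 \le d_1 < c_2 \le d_2 < \cdots < c_k \le d_k = 1$, and let $\operatorname{meas}(E) = \sum_{i=1}^k (d_i - c_i)$. Then \[ \beta(E) := \max_{q} \min\left(\mathbb{E}_{i\sim q}[U_0(i)],\ \mathbb{E}_{i\sim q}[U_1(i)]\right) \ge \frac{1}{2 - \operatorname{meas}(E)}, \] where the maximum is over probability distributions $q$ on $\{1,\dots,k\}$.
   Context: For $i \in [k]$, $U_0(i) = \prod_{j=1}^{i-1} \frac{1 - c_{j+1}}{1 - d_j}$ and $U_1(i) = \prod_{l=i}^{k-1} \frac{d_l}{c_{l+1}}$ (empty products equal $1$). *)

(* Defs.v *)
From mathcomp Require Import all_boot all_order all_algebra.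
Set Implicit Arguments. Unset Strict Implicit. Unset Printing Implicit Defensive.
Import Order.TTheory GRing.Theory Num.Theory.
Local Open Scope ring_scope.

(* Endpoints are given as functions c d : nat -> R; only indices 1..k matter. *)

Definition U0 {R : realFieldType} (c d : nat -> R) (i : nat) : R :=
  \prod_(1 <= j < i) ((1 - c j.+1) / (1 - d j)).

Definition U1 {R : realFieldType} (c d : nat -> R) (k i : nat) : R :=
  \prod_(i <= l < k) (d l / c l.+1).

Definition meas {R : realFieldType} (c d : nat -> R) (k : nat) : R :=
  \sum_(1 <= i < k.+1) (d i - c i).

Definition is_distr {R : realFieldType} (k : nat) (q : nat -> R) : Prop :=
  (forall i, (1 <= i <= k)%N -> 0 <= q i) /\ \sum_(1 <= i < k.+1) q i = 1.

Definition expect {R : realFieldType} (k : nat) (q f : nat -> R) : R :=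
  \sum_(1 <= i < k.+1) q i * f i.

(* Main.v *)
Require Import Defs.
From mathcomp Require Import all_boot all_order all_algebra.
From mathcomp Require Import ring lra zify.
From Stdlib Require Import Lia.
Import Order.TTheory GRing.Theory Num.Theory.
Local Open Scope ring_scope.

Theorem claim3p5 (R : realFieldType) (k : nat) (c d : nat -> R)
  (hk : (1 <= k)%N)
  (hc1 : c 1%N = 0) (hdk : d k = 1)
  (hcd : forall i, (1 <= i <= k)%N -> c i <= d i)
  (hdc : forall i, (1 <= i < k)%N -> d i < c i.+1) :
  exists q : nat -> R, is_distr k q /\
    Num.min (expect k q (U0 c d)) (expect k q (U1 c d k))
      >= 1 / (2 - meas c d k).
Proof.
have dmono : forall i j, (1 <= i)%N -> (i <= j)%N -> (j <= k)%N -> d i <= d j.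
  move=> i j hi hij hj; elim: j hij hj => [|j IH] hij hj.
    by move: hi hij; case: i.
  case: (ltngtP i j.+1) hij => // [hlt|->] _; last by [].
  have h1 := IH hlt (ltnW hj).
  have h2 := hdc j (introT andP (conj (leq_trans hi hlt) hj)).
  have h3 := hcd j.+1 (introT andP (conj (leq_trans hi (ltnW hlt)) hj)).
  lra.
have d0 : forall i, (1 <= i <= k)%N -> 0 <= d i /\ d i <= 1.
  move=> i /andP[h1 h2]; split.
    have := dmono 1%N i isT h1 h2; have := hcd 1%N (introT andP (conj isT hk)); lra.
  by rewrite -hdk; apply: dmono.
have dlt1 : forall i, (1 <= i < k)%N -> d i < 1.
  move=> i /andP[h1 h2].
  have := hdc i (introT andP (conj h1 h2)).
  have := hcd i.+1 (introT andP (conj (leq_trans h1 (leqnSn i)) h2)).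
  have := d0 i.+1 (introT andP (conj (leq_trans h1 (leqnSn i)) h2)).
  lra.
have cpos : forall i, (1 <= i < k)%N -> 0 < c i.+1.
  move=> i /andP[h1 h2].
  have := hdc i (introT andP (conj h1 h2)).
  have := d0 i (introT andP (conj h1 (ltnW h2))).
  lra.
pose cc j := if j == k.+1 then 1 else c j.
pose dd j := if j == 0%N then 0 else d j.
pose w i := cc i.+1 - dd i.-1.
pose S := \sum_(1 <= i < k.+1) w i.
have wpos : forall i, (1 <= i <= k)%N -> 0 < w i.
  move=> i /andP[h1 h2]; rewrite /w /cc /dd eqSS.
  case: (ltngtP i k) h2 => // [hlt|->] _.
    have := hdc i (introT andP (conj h1 hlt)).
    case: i h1 hlt => // -[|i] _ hlt /=.
      have := d0 1%N (introT andP (conj isT hk)); lra.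
    have := hdc i.+1 (introT andP (conj isT (ltnW hlt))).
    have := hcd i.+2 (introT andP (conj isT (ltnW hlt))).
    lra.

  case: ifP => [_|/negbT hk1]; first lra.
  have hk' : (1 <= k.-1 < k)%N by apply/andP; split; [rewrite lt0n | rewrite prednK ?ltnSn //; lia].
  have := dlt1 _ hk'; lra.
have Spos : 0 < S.
  rewrite /S big_nat_recl //.
  have := wpos 1%N (introT andP (conj isT hk)).
  have : 0 <= \sum_(1 <= i < k) w i.+1.
    rewrite big_nat_cond; apply: sumr_ge0 => i /andP[/andP[h1 h2] _].
    by apply: ltW; apply: wpos; rewrite /= h2.
  lra.
have Smeas : S = 2 - meas c d k.
  have hA : \sum_(1 <= i < k.+1) cc i.+1 = \sum_(1 <= i < k.+1) c i + 1.
    have e1 := big_nat_recl k.+1 1 (fun i => cc i) (leqW hk) (op := +%R) (idx := 0).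
    rewrite big_nat_recr /= in e1; last exact: leqW.
    have e2 : \sum_(1 <= i < k.+1) cc i = \sum_(1 <= i < k.+1) c i.
      apply: eq_big_nat => i /andP[_ hi]; rewrite /cc ifF //; apply/negbTE; rewrite neq_ltn hi.
      done.
    rewrite /cc /= eqxx ifF in e1; last by apply/negbTE; rewrite neq_ltn ltnS hk.
    rewrite -/cc hc1 e2 in e1; lra.
  have hB : \sum_(1 <= i < k.+1) dd i.-1 = \sum_(1 <= i < k.+1) d i - 1.
    rewrite big_add1 /= [in RHS]big_add1 /=.
    have e1 := big_nat_recl k 0 (fun i => dd i) (leq0n k) (op := +%R) (idx := 0).
    rewrite big_nat_recr //= in e1.
    have hk0 : (k == 0%N) = false by rewrite eqn0Ngt hk.
    rewrite /dd /= hk0 in e1 *; rewrite -hdk; lra.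
  have -> : S = \sum_(1 <= i < k.+1) cc i.+1 - \sum_(1 <= i < k.+1) dd i.-1 by rewrite /S /w -sumrB.
  rewrite hA hB /meas sumrB; lra.
have sumU0 : \sum_(1 <= i < k.+1) w i * U0 c d i = 1.
  pose V i := - (U0 c d i * (1 - dd i.-1)).
  rewrite (@telescope_sumr_eq _ 1 k.+1 V) //; last first.
    move=> i /andP[h1 h2]; rewrite /V /w /cc /dd /= eqSS.
    have -> : U0 c d i.+1 = U0 c d i * ((1 - c i.+1) / (1 - d i)) by rewrite /U0 big_nat_recr.
    have hi0 : (i == 0%N) = false by rewrite eqn0Ngt h1.
    rewrite hi0; rewrite ltnS in h2.
    case: (ltngtP i k) h2 => // [hlt|->] _.
      have := dlt1 i (introT andP (conj h1 hlt)) => hd.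
      field; lra.
    rewrite hdk; ring.
  rewrite /V /dd /= eqn0Ngt hk /= hdk subrr mulr0 /U0 big_geq //; ring.
have sumU1 : \sum_(1 <= i < k.+1) w i * U1 c d k i = 1.
  pose W j := if j == 0%N then 0 else U1 c d k j * cc j.+1.
  pose G i := W i.-1.
  rewrite (@telescope_sumr_eq _ 1 k.+1 G) //; last first.
    move=> i /andP[h1 h2]; rewrite ltnS in h2; rewrite /G /W /w /dd /=.
    case: i h1 h2 => // -[|i] _ h2 /=.
      ring.
    have -> : U1 c d k i.+1 = (d i.+1 / c i.+2) * U1 c d k i.+2 by rewrite /U1 big_ltn.
    have hc := cpos i.+1 (introT andP (conj isT h2)).
    have -> : cc i.+2 = c i.+2 by rewrite /cc ifF //; apply/negbTE; rewrite neq_ltn ltnS h2.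
    field; lra.
  rewrite /G /W /= eqn0Ngt hk /= /U1 big_geq // /cc eqxx; ring.
exists (fun i => w i / S); split.
  split.
    move=> i hi; apply: divr_ge0; [exact: ltW (wpos i hi) | exact: ltW].
  by rewrite -mulr_suml divff // gt_eqF.
have e0 : expect k (fun i => w i / S) (U0 c d) = 1 / S.
  rewrite /expect -sumU0 mulr_suml; apply: eq_bigr => i _; field; lra.
have e1 : expect k (fun i => w i / S) (U1 c d k) = 1 / S.
  rewrite /expect -sumU1 mulr_suml; apply: eq_bigr => i _; field; lra.
by rewrite e0 e1 Smeas minEle lexx.
Qed.
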